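(* Let $m\ge3$, $\mu>0$, $c\in\mathbb{R}^m_{\ge0}$ with matrix form $\mathbf{C}\in\mathbb{R}^{L\times R}_{\ge0}$ ($\mathbf{C}_{ij}=c_{(i,j)}$), demands $d=(d_L,d_R)$ with $d_L\in\Delta^L$, $d_R\in\Delta^R$, and $\mathbf{K}=\exp(-\mathbf{C}/\mu)$ entrywise. Let $u\in\mathbb{R}^L_{>0}$, $v\in\mathbb{R}^R_{>0}$, $\mathbf{X}=\mathrm{diag}(u)\mathbf{K}\mathrm{diag}(v)$, and $x\in\mathbb{R}^m_{>0}$ the vectorization $x_{(i,j)}=\mathbf{X}_{ij}$. Suppose that for some $\Delta\ge0$, $$\|\mathbf{X}\mathbf{1}-d_L\|_1+\|\mathbf{X}^\top\mathbf{1}-d_R\|_1\le\Delta.$$ Then $\hat x:=x/\|x\|_1\in\Delta^m$ satisfies $$\langle c,\hat x\rangle+\mu H(\hat x)\le\mathrm{OPT}_\mu(d)+3C\Delta+\mu m^{-30},\qquad C:=2(\|c\|_\infty+33\mu\log m).$$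
   Context: $L,R$ are finite nonempty sets, $m=|L||R|$, and coordinates of $\mathbb{R}^m$ are indexed by pairs $(i,j)\in L\times R$. $\mathbf{B}\in\{0,1\}^{m\times(|L|+|R|)}$ is the unsigned edge-vertex incidence matrix of the complete bipartite graph on $L\cup R$: $\mathbf{B}_{(i,j),v}=1$ iff $v\in\{i,j\}$. $H(x)=\sum_i x_i\log x_i$ ($0\log0=0$, natural log). $\mathrm{OPT}_\mu(d)=\min_{x\in\Delta^m,\ \mathbf{B}^\top x=d}\ \langle c,x\rangle+\mu H(x)$. $\Delta^k$ denotes the probability simplex. *)

(* Defs.v *)
From HB Require Import structures.
From mathcomp Require Import all_boot all_order all_algebra.
From mathcomp Require Import all_classical all_reals all_analysis.
Set Implicit Arguments. Unset Strict Implicit. Unset Printing Implicit Defensive.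
Import Order.TTheory GRing.Theory Num.Theory.
Local Open Scope ring_scope.
Local Open Scope classical_set_scope.

Definition xlogx {T : realType} (t : T) : T := if t == 0 then 0 else t * ln t.

Definition Hent {T : realType} {I : finType} (x : I -> T) : T :=
  \sum_(i : I) xlogx (x i).

Definition in_simplex {T : realType} {I : finType} (x : I -> T) : Prop :=
  (forall i, 0 <= x i) /\ \sum_(i : I) x i = 1.

(* B^T x = d with B the edge-vertex incidence matrix of K_{L,R},
   coordinates of x indexed by pairs (i,j) in L x R. *)
Definition marg_ok {T : realType} {L R : finType}
  (x : (L * R)%type -> T) (dL : L -> T) (dR : R -> T) : Prop :=
  (forall i : L, \sum_(j : R) x (i, j) = dL i) /\
  (forall j : R, \sum_(i : L) x (i, j) = dR j).

Definition reg_obj {T : realType} {I : finType} (c : I -> T) (mu : T) (x : I -> T) : T :=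
  \sum_(i : I) c i * x i + mu * Hent x.

Definition OPT {T : realType} {L R : finType}
  (c : (L * R)%type -> T) (mu : T) (dL : L -> T) (dR : R -> T) : T :=
  inf [set reg_obj c mu x | x in [set x | in_simplex x /\ marg_ok x dL dR]].

(* Main.v *)
Require Import Defs.
From HB Require Import structures.
From mathcomp Require Import all_boot all_order all_algebra.
From mathcomp Require Import all_classical all_reals all_analysis.
From mathcomp Require Import lra ring.
Import Order.TTheory GRing.Theory Num.Theory.
Local Open Scope ring_scope.

Lemma xlogx_dual (T : realType) (t w : T) : 0 <= t ->
  t * w + t - expR w <= xlogx t.
Proof.
move=> t0; rewrite /xlogx; have [->|tn0] := eqVneq t 0.
  by rewrite mul0r add0r sub0r oppr_le0 expR_ge0.
have tp : 0 < t by rewrite lt_def tn0 t0.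
have h := expR_ge1Dx (w - ln t).
rewrite expRB lnK ?posrE // in h.
have h2 : t * (1 + (w - ln t)) <= t * (expR w / t) by rewrite ler_pM2l.
rewrite mulrCA divff ?mulr1 // in h2.
rewrite mulrDr mulr1 mulrDr mulrN in h2; lra.
Qed.

Lemma sum_pair (T : realType) (L R : finType) (F : (L * R)%type -> T) :
  \sum_(e : (L * R)%type) F e = \sum_i \sum_j F (i, j).
Proof.
by rewrite (pair_bigA _ (fun i j => F (i, j))); apply: eq_bigr => -[].
Qed.

Lemma bilin_sum (T : realType) (L R : finType) (y : (L * R)%type -> T)
  (al : L -> T) (be : R -> T) :
  \sum_(e : (L * R)%type) y e * (al e.1 + be e.2) =
  \sum_i al i * (\sum_j y (i, j)) + \sum_j be j * (\sum_i y (i, j)).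
Proof.
rewrite sum_pair.
under eq_bigr do under eq_bigr do rewrite mulrDr.
under eq_bigr do rewrite big_split /=.
rewrite big_split /=; congr (_ + _).
  by apply: eq_bigr => i _; rewrite mulr_sumr; apply: eq_bigr => j _; rewrite mulrC.
rewrite exchange_big /=; apply: eq_bigr => j _; rewrite mulr_sumr.
by apply: eq_bigr => i _; rewrite mulrC.
Qed.

Lemma weak_dual (T : realType) (L R : finType) (c : (L * R)%type -> T) (mu : T)
  (dL : L -> T) (dR : R -> T) (al : L -> T) (be : R -> T) y :
  0 < mu -> in_simplex y -> marg_ok y dL dR ->
  \sum_i al i * dL i + \sum_j be j * dR j + mu
    - mu * \sum_(e : (L * R)%type) expR ((al e.1 + be e.2 - c e) / mu)
  <= reg_obj c mu y.
Proof.
move=> mu0 [y0 y1] [mL mR].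
have key : forall e, y e * (al e.1 + be e.2) + mu * y e
   - mu * expR ((al e.1 + be e.2 - c e) / mu) <= c e * y e + mu * xlogx (y e).
  move=> e; set W := (al e.1 + be e.2 - c e) / mu.
  have eW : mu * W = al e.1 + be e.2 - c e by rewrite /W mulrC divfK ?gt_eqF.
  have h := @xlogx_dual T (y e) W (y0 e).
  have h2 := ler_wpM2l (ltW mu0) h.
  have E : mu * (y e * W + y e - expR W) =
     y e * (al e.1 + be e.2) - c e * y e + mu * y e - mu * expR W.
    by rewrite !mulrDr mulrN mulrCA eW; ring.
  rewrite E in h2; lra.
have -> : reg_obj c mu y = \sum_e (c e * y e + mu * xlogx (y e)).
  by rewrite /reg_obj /Hent big_split /= mulr_sumr.
apply: le_trans (ler_sum _ (fun e _ => key e)).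
rewrite big_split /= big_split /= bilin_sum -mulr_sumr y1 mulr1.
rewrite sumrN -mulr_sumr.
have -> : \sum_i al i * \sum_j y (i, j) = \sum_i al i * dL i.
  by apply: eq_bigr => i _; rewrite mL.
have -> : \sum_j be j * \sum_i y (i, j) = \sum_j be j * dR j.
  by apply: eq_bigr => j _; rewrite mR.
by [].
Qed.

Lemma OPT_lb (T : realType) (L R : finType) (c : (L * R)%type -> T) (mu : T)
  (dL : L -> T) (dR : R -> T) (al : L -> T) (be : R -> T) :
  0 < mu -> in_simplex dL -> in_simplex dR ->
  \sum_i al i * dL i + \sum_j be j * dR j + mu
    - mu * \sum_(e : (L * R)%type) expR ((al e.1 + be e.2 - c e) / mu)
  <= OPT c mu dL dR.
Proof.
move=> mu0 [dL0 dL1] [dR0 dR1]; rewrite /OPT; apply: lb_le_inf.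
  exists (reg_obj c mu (fun e => dL e.1 * dR e.2)).
  exists (fun e => dL e.1 * dR e.2) => //; split; [split|split].
  - by move=> e; rewrite mulr_ge0.
  - rewrite sum_pair /=.
    under eq_bigr do rewrite -mulr_sumr dR1 mulr1.
    by rewrite dL1.
  - by move=> i /=; rewrite -mulr_sumr dR1 mulr1.
  - by move=> j /=; rewrite -mulr_suml dL1 mul1r.
move=> z [y [ys ym] <-]; exact: weak_dual.
Qed.

Lemma norm_err (T : realType) (I : finType) (f g : I -> T) :
  (forall i, 0 <= f i) -> \sum_i g i = 1 -> 0 < \sum_i f i ->
  \sum_i `|f i / (\sum_k f k) - g i| <= 2 * \sum_i `|f i - g i|.
Proof.
move=> f0 g1 S0; set S := \sum_k f k.
have h1 : `|1 - S| <= \sum_i `|f i - g i|.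
  rewrite -g1 -sumrB; apply: le_trans (ler_norm_sum _ _ _) _.
  by apply: ler_sum => i _; rewrite distrC.
have h2 : \sum_i `|f i / S - g i| <= \sum_i (`|f i / S - f i| + `|f i - g i|).
  by apply: ler_sum => i _; apply: ler_distD.
have h3 : \sum_i `|f i / S - f i| = `|1 - S|.
  have -> : \sum_i `|f i / S - f i| = \sum_i f i * `|S^-1 - 1|.
    apply: eq_bigr => i _; rewrite -{2}(mulr1 (f i)) -mulrBr normrM.
    by rewrite ger0_norm.
  rewrite -mulr_suml -/S.
  have -> : 1 - S = S * (S^-1 - 1) by rewrite mulrBr mulr1 divff ?gt_eqF.
  by rewrite normrM (ger0_norm (ltW S0)).
rewrite big_split /= h3 in h2; lra.
Qed.

Lemma centered (T : realType) (I : finType) (f g w : I -> T) (K0 Mh : T) :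
  \sum_i f i = \sum_i g i -> (forall i, `|w i - K0| <= Mh) ->
  \sum_i w i * f i - \sum_i w i * g i <= Mh * \sum_i `|f i - g i|.
Proof.
move=> fg hw.
have -> : \sum_i w i * f i - \sum_i w i * g i =
          \sum_i (w i - K0) * (f i - g i).
  rewrite -sumrB; under [RHS]eq_bigr do rewrite mulrBl !mulrBr.
  rewrite !sumrB -!mulr_sumr fg; ring.
rewrite mulr_sumr; apply: ler_sum => i _.
apply: le_trans (ler_norm _) _; rewrite normrM.
by apply: ler_wpM2r => //.
Qed.

Lemma argmax_ex (T : realType) (I : finType) (i0 : I) (F : I -> T) :
  exists i1, forall i, F i <= F i1.
Proof.
case: (@arg_maxP _ T I i0 predT F isT) => i1 _ h.
by exists i1 => i; apply: h.
Qed.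

Theorem mainTheorem14 (T : realType) (L R : finType)
  (c : (L * R)%type -> T) (mu : T) (dL : L -> T) (dR : R -> T)
  (u : L -> T) (v : R -> T) (Delta : T) :
  (0 < #|L|)%N -> (0 < #|R|)%N ->
  (3 <= #|L| * #|R|)%N ->
  0 < mu ->
  (forall e, 0 <= c e) ->
  in_simplex dL -> in_simplex dR ->
  (forall i, 0 < u i) -> (forall j, 0 < v j) ->
  0 <= Delta ->
  let m := (#|L| * #|R|)%N in
  let Kmat := fun i j => expR (- c (i, j) / mu) in
  let X := fun i j => u i * Kmat i j * v j in
  let x := fun e : (L * R)%type => X e.1 e.2 in
  \sum_(i : L) `| \sum_(j : R) X i j - dL i |
    + \sum_(j : R) `| \sum_(i : L) X i j - dR j | <= Delta ->
  let xhat := fun e => x e / \sum_(e' : (L * R)%type) x e' in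
  let Cst := 2 * (\big[Num.max/0]_(e : (L * R)%type) `|c e| + 33 * mu * ln (m%:R)) in
  in_simplex xhat /\
  reg_obj c mu xhat <= OPT c mu dL dR + 3 * Cst * Delta + mu * (m%:R ^- 30).

Proof.
move=> L0 R0 m3 mu0 c0 sL sR u0 v0 D0 m Kmat X x hD xhat Cst.
have [i0 _] := card_gt0P L0; have [j0 _] := card_gt0P R0.
have xpos : forall e, 0 < x e.
  by move=> [i j]; rewrite /x /X /Kmat /= !mulr_gt0 ?expR_gt0.
set S := \sum_(e' : (L * R)%type) x e'.
have S0 : 0 < S.
  rewrite /S (bigD1 (i0, j0)) //=.
  have : 0 <= \sum_(e | e != (i0, j0)) x e by apply: sumr_ge0 => e _; apply: ltW.
  have := xpos (i0, j0); lra.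
have xhE : forall e, xhat e = x e / S by [].
have xh0 : forall e, 0 <= xhat e by move=> e; rewrite xhE divr_ge0 // ltW.
have xh1 : \sum_e xhat e = 1.
  by under eq_bigr do rewrite xhE; rewrite -mulr_suml divff ?gt_eqF.
split; first by split.
pose a i := mu * ln (u i / S).
pose b j := mu * ln (v j).
have Hxh : forall e, xhat e = expR ((a e.1 + b e.2 - c e) / mu).
  move=> [i j] /=.
  have -> : (a i + b j - c (i, j)) / mu = ln (u i / S) + ln (v j) + (- c (i, j) / mu).
    by rewrite /a /b; field; rewrite gt_eqF.
  rewrite !expRD !lnK ?posrE ?divr_gt0 //.
  by rewrite xhE /x /X /Kmat /=; field; rewrite gt_eqF.
have [i1 hi1] := @argmax_ex T _ i0 a.
have [j1 hj1] := @argmax_ex T _ j0 b.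
set kap := \big[Num.max/0]_(e : (L * R)%type) `|c e|.
have hc : forall e, c e <= kap.
  by move=> e; apply: le_trans (ler_norm _) (le_bigmax _ _ e).
have kap0 : 0 <= kap by apply: le_trans (c0 (i0, j0)) (hc _).
have AB : a i1 + b j1 <= kap.
  have h1 : xhat (i1, j1) <= 1.
    rewrite -xh1 (bigD1 (i1, j1)) //=.
    have : 0 <= \sum_(e | e != (i1, j1)) xhat e by apply: sumr_ge0 => e _.
    lra.
  rewrite Hxh expR_le1 /= in h1.
  have e1 : a i1 + b j1 - c (i1, j1) = (a i1 + b j1 - c (i1, j1)) / mu * mu.
    by rewrite divfK ?gt_eqF.
  have := hc (i1, j1); have : (a i1 + b j1 - c (i1, j1)) / mu * mu <= 0.
    by rewrite mulr_le0_ge0 // ltW.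
  lra.
set lnm := ln (m%:R : T).
have m1 : (1 : T) <= m%:R by rewrite ler1n; apply: leq_trans m3.
have mpos : (0 : T) < m%:R by lra.
have lnm0 : 0 <= lnm by apply: ln_ge0.
set N := ((m%:R : T) ^+ 31).
have N0 : 0 < N by rewrite exprn_gt0.
have lnN : ln N = 31%:R * lnm by rewrite /N lnXn // mulr_natl.
set M := kap + mu * ln N.
have M0 : 0 <= M by rewrite /M lnN; have := mulr_ge0 (ltW mu0) lnm0; lra.
pose ab i := Num.max (a i) (a i1 - M).
pose bb j := Num.max (b j) (b j1 - M).
have aab : forall i, a i <= ab i by move=> i; rewrite le_max lexx.
have bbb : forall j, b j <= bb j by move=> j; rewrite le_max lexx.
have abA : forall i, a i1 - M <= ab i <= a i1.
  move=> i; rewrite le_max lexx orbT /= ge_max hi1 /=; lra.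
have bbB : forall j, b j1 - M <= bb j <= b j1.
  move=> j; rewrite le_max lexx orbT /= ge_max hj1 /=; lra.
pose p (e : (L * R)%type) := expR ((ab e.1 + bb e.2 - c e) / mu).
have pb : forall e, p e <= xhat e + N^-1.
  move=> [i j]; rewrite /p /=.
  case: (boolP ((a i1 - M <= a i) && (b j1 - M <= b j))) => [/andP[ha hb]|hn].
    rewrite /ab /bb max_l // max_l // -(Hxh (i, j)) /=.
    have : 0 < N^-1 by rewrite invr_gt0.
    lra.
  have hs0 : ab i + bb j <= a i1 + b j1 - M.
    move: hn; rewrite negb_and -!ltNge => /orP[ha|hb].
      rewrite /ab (max_r (ltW ha)); have := bbB j; lra.
    rewrite /bb (max_r (ltW hb)); have := abA i; lra.
  have hs : ab i + bb j - c (i, j) <= - (mu * ln N).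
    have eM : M = kap + mu * ln N by [].
    move: (c0 (i, j)) AB (hc (i, j)); lra.
  have hs2 : (ab i + bb j - c (i, j)) / mu <= - ln N.
    by rewrite ler_pdivrMr // mulNr mulrC.
  apply: le_trans (_ : expR (- ln N) <= _); first by rewrite ler_expR.
  rewrite expRN lnK ?posrE //; have := xh0 (i, j); lra.
have psum : \sum_e p e <= 1 + (m%:R : T) ^- 30.
  apply: le_trans (ler_sum _ (fun e _ => pb e)) _.
  rewrite big_split /= xh1 sumr_const card_prod -/m -(mulr_natr (N^-1)).
  have -> : N^-1 * m%:R = (m%:R : T) ^- 30.
    by rewrite /N exprS invfM mulrAC mulVf ?gt_eqF // mul1r.
  by [].
have hopt := @OPT_lb T L R c mu dL dR ab bb mu0 sL sR.
pose r i := \sum_j xhat (i, j).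
pose s j := \sum_i xhat (i, j).
have val : reg_obj c mu xhat = \sum_i a i * r i + \sum_j b j * s j.
  rewrite -bilin_sum /reg_obj /Hent mulr_sumr -big_split /=.
  apply: eq_bigr => e _.
  have xn0 : xhat e != 0 by rewrite xhE mulf_neq0 ?invr_eq0 ?gt_eqF.
  rewrite /xlogx (negbTE xn0) [in ln (xhat e)](Hxh e) expRK.
  by field; rewrite gt_eqF.
case: sL => dL0 dL1; case: sR => dR0 dR1.
pose Rw i := \sum_j X i j.
pose Cl j := \sum_i X i j.
have SR : S = \sum_i Rw i by rewrite /S sum_pair.
have SC : S = \sum_j Cl j by rewrite /S sum_pair exchange_big.
have rE : forall i, r i = Rw i / \sum_k Rw k.
  by move=> i; rewrite /r -SR mulr_suml.
have sE : forall j, s j = Cl j / \sum_k Cl k.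
  by move=> j; rewrite /s -SC mulr_suml.
have errL : \sum_i `|r i - dL i| <= 2 * \sum_i `|Rw i - dL i|.
  under eq_bigr do rewrite rE.
  apply: norm_err => //; last by rewrite -SR.
  by move=> i; apply: sumr_ge0 => j _; apply: ltW (xpos (i, j)).
have errR : \sum_j `|s j - dR j| <= 2 * \sum_j `|Cl j - dR j|.
  under eq_bigr do rewrite sE.
  apply: norm_err => //; last by rewrite -SC.
  by move=> j; apply: sumr_ge0 => i _; apply: ltW (xpos (i, j)).
have r1 : \sum_i r i = 1 by rewrite -xh1 sum_pair.
have s1 : \sum_j s j = 1 by rewrite -xh1 sum_pair exchange_big.
have r0 : forall i, 0 <= r i by move=> i; apply: sumr_ge0.
have s0 : forall j, 0 <= s j by move=> j; apply: sumr_ge0.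
have hwL : forall i, `|ab i - (a i1 - M / 2)| <= M / 2.
  by move=> i; rewrite ler_norml; have := abA i; move/andP => [h1 h2]; apply/andP; split; lra.
have hwR : forall j, `|bb j - (b j1 - M / 2)| <= M / 2.
  by move=> j; rewrite ler_norml; have := bbB j; move/andP => [h1 h2]; apply/andP; split; lra.
have cL := @centered T L r dL ab (a i1 - M / 2) (M / 2) (etrans r1 (esym dL1)) hwL.
have cR := @centered T R s dR bb (b j1 - M / 2) (M / 2) (etrans s1 (esym dR1)) hwR.
have ar : \sum_i a i * r i <= \sum_i ab i * r i.
  by apply: ler_sum => i _; apply: ler_wpM2r.
have bs : \sum_j b j * s j <= \sum_j bb j * s j.
  by apply: ler_sum => j _; apply: ler_wpM2r.
have hD' : \sum_i `|Rw i - dL i| + \sum_j `|Cl j - dR j| <= Delta := hD.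
have hMD : M / 2 * (\sum_i `|r i - dL i| + \sum_j `|s j - dR j|) <= M * Delta.
  apply: le_trans (_ : M / 2 * (2 * Delta) <= _).
    by apply: ler_wpM2l; [rewrite divr_ge0 | lra].
  by rewrite le_eqVlt; apply/orP; left; apply/eqP; field.
have psum' : \sum_(e : (L * R)%type) expR ((ab e.1 + bb e.2 - c e) / mu)
   <= 1 + (m%:R : T) ^- 30 := psum.
have mp : mu * \sum_(e : (L * R)%type) expR ((ab e.1 + bb e.2 - c e) / mu)
   <= mu + mu * (m%:R : T) ^- 30.
  by rewrite -[X in _ <= X + _]mulr1 -mulrDr; apply: ler_wpM2l => //; apply: ltW.
have eC : Cst = 2 * (kap + 33 * mu * lnm) by [].
have hM : M * Delta <= 3 * Cst * Delta.
  apply: ler_wpM2r => //; rewrite eC /M lnN.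
  have := mulr_ge0 (ltW mu0) lnm0; lra.
rewrite val.
have e1 := mulrDr (M / 2) (\sum_i `|r i - dL i|) (\sum_j `|s j - dR j|).
lra.
Qed.
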